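(* (i) For every feasible transition $s\xrightarrow{\alpha}s'$ of the BDM between states $s,s'\in S$, with $\alpha\in\{D,I,N_=,N_<,d_-,b_+\}$, one has $K(s')=K(s)+1$ if $\alpha=I$, $K(s')=K(s)-1$ if $\alpha=N_<$, and $K(s')=K(s)$ if $\alpha\in\{D,N_=,d_-,b_+\}$. (ii) Consequently, if $s_0\xrightarrow{\alpha_1\cdots\alpha_k}s$ is any path of feasible transitions from the initial state $s_0$ to $s$, and $\#I$, $\#N_<$ denote the numbers of indices $i$ with $\alpha_i=I$, resp. $\alpha_i=N_<$, then $K(s)-K(s_0)=K(s)=\#I-\#N_<$.
   Context: Fix integers $M\ge 1$ and $q\ge 2$. The augmented state set is $\overline S=\{(b_1,\dots,b_M,d;T,t): b_m,d,T\in\mathbb Z,\ 1\le t\le M+1,\ d+T+\sum_{m=1}^M b_m=0\}$, and the BDM state set is $S=\{s\in\overline S: 0\le T\le M\}$. The initial state is $s_0=(0,\dots,0,0;0,M+1)$. The feasible transitions (actions) from $s=(b_1,\dots,b_M,d;T,t)\in S$ are: (a) if $t\le M$ and $b_t>d$: action $D$ (probability $(q-1)/q$) to $(b_1,\dots,b_{t-1},d,b_{t+1},\dots,b_M,b_t;T,t+1)$ (swap of $b_t$ and $d$), and action $I$ (probability $1/q$) to $(b_1,\dots,b_M,d;T,t+1)$; (b) if $t\le M$ and $b_t=d$: action $N_=$ (probability 1) to $(b_1,\dots,b_M,d;T,t+1)$; (c) if $t\le M$ and $b_t<d$: action $N_<$ (probability 1) to $(b_1,\dots,b_M,d;T,t+1)$;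 (d) if $t=M+1$, $T<M$: action $d_-$ (probability 1) to $(b_1,\dots,b_M,d-1;T+1,1)$; (e) if $t=M+1$, $T=M$: action $b_+$ (probability 1) to $(b_1+1,\dots,b_M+1,d;0,1)$. For $s=(b_1,\dots,b_M,d;T,t)\in\overline S$ let $x=(b_1,\dots,b_{t-1},d,b_t,\dots,b_M)$ ($d$ in position $t$), let $\tilde b_1\ge\dots\ge\tilde b_{M+1}$ be its entries sorted nonincreasingly and $\pi_s$ the minimum number of neighbouring transpositions needed to sort $x$ nonincreasingly. The class of $s$ is $K(s)=-\pi_s+MT+2\sum_{m=1}^{M+1}\tilde b_m(M+1-m)$; note $K(s_0)=0$. *)

(* Defs.v *)
From mathcomp Require Import all_boot all_order all_algebra.
Set Implicit Arguments. Unset Strict Implicit. Unset Printing Implicit Defensive.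
Import Order.TTheory GRing.Theory Num.Theory.
Local Open Scope ring_scope.

(* An augmented state (b_1..b_M, d; T, t).  b is stored as a list (b_1,...,b_M). *)
Record bdm_state := BDMState { sb : seq int; sd : int; sT : int; st : nat }.

Definition in_Sbar (M : nat) (s : bdm_state) : Prop :=
  [/\ size (sb s) = M, (1 <= st s <= M.+1)%N &
      sd s + sT s + \sum_(x <- sb s) x = 0].

Definition in_S (M : nat) (s : bdm_state) : Prop :=
  in_Sbar M s /\ 0 <= sT s <= M%:Z.

Definition s0 (M : nat) : bdm_state := BDMState (nseq M 0) 0 0 M.+1.

(* b_t (1-indexed) *)
Definition bt (s : bdm_state) : int := nth 0 (sb s) (st s).-1.

Inductive action := A_D | A_I | A_Neq | A_Nlt | A_dminus | A_bplus.

Inductive trans (M q : nat) : bdm_state -> action -> rat -> bdm_state -> Prop :=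
| tr_D b d T t : in_S M (BDMState b d T t) -> (t <= M)%N ->
    nth 0 b t.-1 > d ->
    trans M q (BDMState b d T t) A_D ((q%:R - 1) / q%:R)
          (BDMState (set_nth 0 b t.-1 d) (nth 0 b t.-1) T t.+1)
| tr_I b d T t : in_S M (BDMState b d T t) -> (t <= M)%N ->
    nth 0 b t.-1 > d ->
    trans M q (BDMState b d T t) A_I (1 / q%:R) (BDMState b d T t.+1)
| tr_Neq b d T t : in_S M (BDMState b d T t) -> (t <= M)%N ->
    nth 0 b t.-1 = d ->
    trans M q (BDMState b d T t) A_Neq 1 (BDMState b d T t.+1)
| tr_Nlt b d T t : in_S M (BDMState b d T t) -> (t <= M)%N ->
    nth 0 b t.-1 < d ->
    trans M q (BDMState b d T t) A_Nlt 1 (BDMState b d T t.+1)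
| tr_dminus b d T : in_S M (BDMState b d T M.+1) -> T < M%:Z ->
    trans M q (BDMState b d T M.+1) A_dminus 1 (BDMState b (d - 1) (T + 1) 1)
| tr_bplus b d : in_S M (BDMState b d M%:Z M.+1) ->
    trans M q (BDMState b d M%:Z M.+1) A_bplus 1
          (BDMState (map (fun x => x + 1) b) d 0 1).

Inductive bdm_path (M q : nat) : bdm_state -> seq action -> bdm_state -> Prop :=
| path_nil s : bdm_path M q s [::] s
| path_cons s a p s' l s'' : trans M q s a p s' -> bdm_path M q s' l s'' ->
    bdm_path M q s (a :: l) s''.

Definition xvec (s : bdm_state) : seq int :=
  take (st s).-1 (sb s) ++ sd s :: drop (st s).-1 (sb s).

Definition noninc (x : seq int) : bool := sorted (fun a b : int => b <= a) x.

(* the neighbouring transposition exchanging positions i and i+1 (0-indexed) *)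
Definition adj_swap (x : seq int) (i : nat) : seq int :=
  set_nth 0 (set_nth 0 x i (nth 0 x i.+1)) i.+1 (nth 0 x i).

Definition sortable_in (x : seq int) (n : nat) : bool :=
  [exists l : n.-tuple 'I_(size x).-1,
     noninc (foldl (fun y (i : 'I_(size x).-1) => adj_swap y i) x l)].

(* minimal number of neighbouring transpositions sorting x nonincreasingly;
   the search range 0..|x|^2 always contains a valid count (bubble sort needs
   at most |x|(|x|-1)/2 swaps), so this is exactly the minimum. *)
Definition pi_min (x : seq int) : nat :=
  find (sortable_in x) (iota 0 ((size x) ^ 2).+1).

Definition Kclass (M : nat) (s : bdm_state) : int :=
  let x := xvec s in
  let tb := sort (fun a b : int => b <= a) x in
  - (pi_min x)%:Z + M%:Z * sT s
  + 2 * \sum_(0 <= i < M.+1) nth 0 tb i * (M - i)%:Z.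

Definition count_act (a : action) (l : seq action) : nat :=
  count (fun b => match a, b with
                  | A_D, A_D | A_I, A_I | A_Neq, A_Neq | A_Nlt, A_Nlt
                  | A_dminus, A_dminus | A_bplus, A_bplus => true
                  | _, _ => false end) l.

Definition Kdelta (a : action) : int :=
  match a with A_I => 1 | A_Nlt => -1 | _ => 0 end.

(* Main.v *)
Require Import Defs.
From mathcomp Require Import all_boot all_order all_algebra.
From mathcomp Require Import zify.
Import Order.TTheory GRing.Theory Num.Theory.
Local Open Scope ring_scope.

Fixpoint inv (l : seq int) : nat :=
  if l is a :: l' then (@count int (fun y : int => (a < y)%R) l' + inv l')%N else 0%N.

Lemma inv_cat p l : inv (p ++ l) = (inv p + inv l + \sum_(y <- p) count (fun z => (y < z)%R) l)%N.
Proof.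
elim: p => [|a p IH] /=; first by rewrite big_nil addn0.
rewrite big_cons IH count_cat; set S := (\sum_(_ <- p) _)%N; lia.
Qed.

Lemma inv_swap p a b r :
  (inv (p ++ a :: b :: r) + (b < a)%R = inv (p ++ b :: a :: r) + (a < b)%R)%N.
Proof.
rewrite !inv_cat.
have -> : (\sum_(y <- p) count (fun z => (y < z)%R) (a :: b :: r) =
          \sum_(y <- p) count (fun z => (y < z)%R) (b :: a :: r))%N.
  by apply: eq_bigr => y _ /=; lia.
rewrite /=; set S := (\sum_(_ <- p) _)%N; case: (a < b)%R; case: (b < a)%R => /=; lia.
Qed.

Lemma noninc_inv y : noninc y -> inv y = 0%N.
Proof.
elim: y => [|a l IH] //= Hs.
have Hp : path (fun a b : int => b <= a) a l by [].
rewrite IH; last exact: (path_sorted Hp).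
have tr : transitive (fun a b : int => b <= a).
  by move=> u v w /= h1 h2; apply: le_trans h2 h1.
have Hall := order_path_min tr Hp.
rewrite addn0; apply/eqP; rewrite -leqn0 leqNgt -has_count; apply/negP.
move/hasP=> [z zl az]. move/allP: Hall => /(_ z zl) /=. by rewrite leNgt az.
Qed.

Lemma inv_noninc y : inv y = 0%N -> noninc y.
Proof.
elim: y => [|a l IH] //= H.
move: H => /eqP; rewrite addn_eq0 => /andP[/eqP H2 /eqP H1].
move: (IH H1); rewrite /noninc.
case: l H1 H2 {IH} => [|b l'] //= _ H2 ->.
rewrite andbT leNgt.
by case: (a < b) H2.
Qed.

Lemma inv_le_sq y : (inv y <= size y ^ 2)%N.
Proof.
elim: y => [|a l IH] //=.
have := @count_size int (fun y : int => a < y) l. 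
rewrite expnS expn1 in IH. move=> h. rewrite expnS expn1. apply: leq_trans (leq_add h IH) _. rewrite mulSn mulnS. lia.
Qed.

Definition aswp (x : seq int) (i : nat) := adj_swap x i.

Lemma adj_swap_cat p a b r : adj_swap (p ++ a :: b :: r) (size p) = p ++ b :: a :: r.
Proof.
elim: p => [|c p IH] //=.
rewrite /adj_swap /= in IH *. by rewrite IH.
Qed.

Lemma decomp2 {y : seq int} {i : nat} : (i.+1 < size y)%N ->
  y = take i y ++ nth 0 y i :: nth 0 y i.+1 :: drop i.+2 y.
Proof.
move=> Hi.
rewrite -(drop_nth 0 (s:=y) (n:=i.+1)) // -(drop_nth 0 (s:=y) (n:=i)) ?cat_take_drop //.
exact: ltn_trans (ltnSn _) Hi.
Qed.

Lemma adj_swap_nth y i : (i.+1 < size y)%N ->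
  adj_swap y i = take i y ++ nth 0 y i.+1 :: nth 0 y i :: drop i.+2 y.
Proof.
move=> Hi.
have Hs : size (take i y) = i by rewrite size_take; case: ltnP; lia.
by rewrite {1}(decomp2 Hi) -[X in adj_swap _ X]Hs adj_swap_cat.
Qed.

Lemma size_adj_swap y i : (i.+1 < size y)%N -> size (adj_swap y i) = size y.
Proof.
move=> Hi; by rewrite adj_swap_nth // [in RHS](decomp2 Hi) !size_cat.
Qed.

Lemma inv_adj_swap y i : (i.+1 < size y)%N ->
  (inv y + (nth 0 y i.+1 < nth 0 y i)%R = inv (adj_swap y i) + (nth 0 y i < nth 0 y i.+1)%R)%N.
Proof.
move=> Hi; rewrite adj_swap_nth // {1}(decomp2 Hi); apply: inv_swap.
Qed.

Arguments inv_adj_swap {y i}.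
Arguments size_adj_swap {y i}.
Arguments adj_swap_nth {y i}.

Lemma ascent y : ~~ noninc y -> exists i, (i.+1 < size y)%N /\ nth 0 y i < nth 0 y i.+1.
Proof.
elim: y => [|a l IH] //.
case: l IH => [|b l'] //= IH.
rewrite /noninc /= negb_and => /orP [Hba|Hs].
  by exists 0%N; split => //; rewrite ltNge.
have [i [H1 H2]] := IH Hs.
by exists i.+1; split.
Qed.

Definition fstep (N : nat) := fun y (i : 'I_N) => adj_swap y i.

Lemma inv_fold_lb N (l : seq 'I_N) y : size y = N.+1 ->
  (inv y <= inv (foldl (@fstep N) y l) + size l)%N.
Proof.
elim: l y => [|i l IH] y Hy /=; first by rewrite addn0.
have Hi : (i.+1 < size y)%N by rewrite Hy ltnS ltn_ord.
have := inv_adj_swap Hi.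
have := IH (adj_swap y i); rewrite size_adj_swap // => /(_ Hy).
rewrite /fstep /=.
case: (nth 0 y i.+1 < nth 0 y i)%R; case: (nth 0 y i < nth 0 y i.+1)%R => /=; lia.
Qed.

Lemma exists_sort N n y : size y = N.+1 -> inv y = n ->
  exists l : seq 'I_N, size l = n /\ noninc (foldl (@fstep N) y l).
Proof.
elim: n y => [|n IH] y Hy Hn.
  by exists [::]; split => //=; apply: inv_noninc.
have Hnn : ~~ noninc y.
  by apply/negP => /noninc_inv; rewrite Hn.
have [i [Hi Hlt]] := ascent _ Hnn.
have HiN : (i < N)%N by rewrite -ltnS -Hy.
have := inv_adj_swap Hi.
rewrite Hlt (lt_gtF Hlt) /= => Hinv.
have [l [Hl Hs]] := IH (adj_swap y i) (etrans (size_adj_swap Hi) Hy) ltac:(lia).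
exists (Ordinal HiN :: l); split; first by rewrite /= Hl.
by [].
Qed.

Lemma find_iota_eq (P : pred nat) N k : P k -> (k < N)%N ->
  (forall j, (j < k)%N -> ~~ P j) -> find P (iota 0 N) = k.
Proof.
move=> Pk kN Hlt.
have Hhas : has P (iota 0 N) by apply/hasP; exists k => //; rewrite mem_iota.
have Hf := find_size P (iota 0 N).
have Hlt' : (find P (iota 0 N) < N)%N by rewrite -[X in (_ < X)%N](size_iota 0 N) -has_find.
case: (ltngtP (find P (iota 0 N)) k) => // H.
  have := nth_find 0 Hhas. rewrite nth_iota // add0n => HP.
  by move: (Hlt _ H); rewrite HP.
have := before_find 0 H. by rewrite nth_iota ?add0n ?Pk // (ltn_trans H Hlt').
Qed.

Lemma pi_min_inv x : (0 < size x)%N -> pi_min x = inv x.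
Proof.
move=> Hx.
have Hsz : size x = (size x).-1.+1 by rewrite prednK.
apply: find_iota_eq.
- have [l [Hl Hs]] := exists_sort _ _ _ Hsz (erefl (inv x)).
  apply/existsP.
  have Hl' : size l == inv x by rewrite Hl.
  by exists (Tuple Hl').
- by rewrite ltnS inv_le_sq.
- move=> j Hj; apply/negP => /existsP [l Hl].
  have := @inv_fold_lb _ (tval l) x Hsz.
  rewrite (noninc_inv _ Hl) size_tuple add0n => H.
  by move: Hj; rewrite ltnNge H.
Qed.

Definition mx (a b : int) : int := if a <= b then b else a.

Lemma mxC a b : mx a b = mx b a.
Proof. rewrite /mx; case: ifP; case: ifP => h1 h2 //; lia. Qed.

Lemma mxxx a : mx a a = a.
Proof. by rewrite /mx; case: ifP. Qed.

Definition Q (l : seq int) : int :=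
  \sum_(a <- l) \sum_(b <- l) mx a b - \sum_(a <- l) a.

Lemma Q_cons c l : Q (c :: l) = Q l + 2 * \sum_(b <- l) mx c b.
Proof.
rewrite /Q !big_cons mxxx.
have -> : \sum_(j <- l) \sum_(b <- c :: l) mx j b = \sum_(j <- l) (mx j c + \sum_(b <- l) mx j b) by apply: eq_bigr => j _; rewrite big_cons.
rewrite big_split /=.
have -> : \sum_(i <- l) mx i c = \sum_(b <- l) mx c b by apply: eq_bigr => i _; rewrite mxC.
set A := \sum_(b <- l) mx c b.
set B := \sum_(i <- l) \sum_(j <- l) mx i j.
set C := \sum_(i <- l) i.
lia.
Qed.

Lemma Q_perm l1 l2 : perm_eq l1 l2 -> Q l1 = Q l2.
Proof.
move=> Hp; rewrite /Q (perm_big _ Hp) /= [X in _ - X](perm_big _ Hp).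
congr (_ - _); apply: eq_bigr => a _; exact: perm_big.
Qed.

Lemma sum_mx_le a l : all (fun b => b <= a) l -> \sum_(b <- l) mx a b = a * (size l)%:Z.
Proof.
elim: l => [|b l IH] /=; first by rewrite big_nil mulr0.
move=> /andP [h1 h2]; rewrite big_cons IH //.
have -> : mx a b = a by rewrite /mx; case: ifP => h //; lia.
by rewrite -addn1 PoszD mulrDr mulr1 addrC.
Qed.

Lemma W_sorted l : noninc l ->
  2 * \sum_(0 <= i < size l) nth 0 l i * (size l - i.+1)%:Z = Q l.
Proof.
elim: l => [|a l IH] Hs; first by rewrite big_nil /Q !big_nil.
have Hp : path (fun a b : int => b <= a) a l by [].
have tr : transitive (fun a b : int => b <= a).
  by move=> u v w /= h1 h2; apply: le_trans h2 h1.
have Hall := order_path_min tr Hp.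
rewrite Q_cons -IH; last exact: (path_sorted Hp).
rewrite /= big_nat_recl //= subn1 /=.
rewrite (sum_mx_le _ _ Hall).
have -> : \sum_(0 <= i < size l) nth 0 (a :: l) i.+1 * ((size l).+1 - i.+2)%:Z
   = \sum_(0 <= i < size l) nth 0 l i * (size l - i.+1)%:Z.
  by apply: eq_bigr => i _; rewrite subSS.
by rewrite mulrDr addrC.
Qed.

Definition Kp (M : nat) (s : bdm_state) : int :=
  - (inv (xvec s))%:Z + M%:Z * sT s + Q (xvec s).

Definition wf (M : nat) (s : bdm_state) : Prop :=
  size (sb s) = M /\ (1 <= st s <= M.+1)%N.

Lemma size_xvec M s : wf M s -> size (xvec s) = M.+1.
Proof.
move=> [Hb /andP [H1 H2]].
rewrite /xvec size_cat /= size_take size_drop Hb.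
case: ltnP => h; lia.
Qed.

Lemma Kclass_eq M s : wf M s -> Kclass M s = Kp M s.
Proof.
move=> Hw.
have Hx := size_xvec _ _ Hw.
rewrite /Kclass /Kp pi_min_inv ?Hx //.
congr (_ + _).
set tb := sort _ _.
have Htb : size tb = M.+1 by rewrite size_sort.
have tot : total (fun a b : int => b <= a) by move=> a b; rewrite orbC le_total.
have Hs : noninc tb by apply: sort_sorted.
have Hp : perm_eq tb (xvec s) by rewrite (perm_sort _ (xvec s)) perm_refl.
rewrite -(Q_perm _ _ Hp) -(W_sorted _ Hs) Htb.
congr (_ * _); apply: eq_bigr => i _; by rewrite subSS.
Qed.

Lemma xv1 p c r d T : xvec (BDMState (p ++ c :: r) d T (size p).+1) = p ++ d :: c :: r.
Proof. by rewrite /xvec /= take_size_cat // drop_size_cat //. Qed.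

Lemma xv2 p c r d T : xvec (BDMState (p ++ c :: r) d T (size p).+2) = p ++ c :: d :: r.
Proof.
rewrite /xvec /=.
have E : p ++ c :: r = rcons p c ++ r by rewrite cat_rcons.
have Hs : size (rcons p c) = (size p).+1 by rewrite size_rcons.
by rewrite E take_size_cat // drop_size_cat // cat_rcons.
Qed.

Lemma set_nth_mid (p r : seq int) (c d : int) : set_nth 0 (p ++ c :: r) (size p) d = p ++ d :: r.
Proof. by elim: p => [|e p IH] //=; rewrite IH. Qed.

Lemma nth_mid (p r : seq int) (c : int) : nth 0 (p ++ c :: r) (size p) = c.
Proof. by rewrite nth_cat ltnn subnn. Qed.

Lemma perm_mid (p r : seq int) (a b : int) : perm_eq (p ++ a :: b :: r) (p ++ b :: a :: r).
Proof. apply/permP => P; rewrite !count_cat /=; lia. Qed.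

Lemma decomp1 (b : seq int) j : (j < size b)%N ->
  exists p c r, b = p ++ c :: r /\ size p = j.
Proof.
move=> Hj; exists (take j b), (nth 0 b j), (drop j.+1 b); split.
  by rewrite -drop_nth // cat_take_drop.
by rewrite size_take Hj.
Qed.

Lemma xv_end b d T : xvec (BDMState b d T (size b).+1) = b ++ [:: d].
Proof. by rewrite /xvec /= take_size drop_size. Qed.

Lemma xv_start b d T : xvec (BDMState b d T 1) = d :: b.
Proof. by rewrite /xvec /= take0 drop0. Qed.

Lemma cross1 (b : seq int) d :
  (\sum_(y <- b) @count int (fun z => (y < z)%R) [:: d] = @count int (fun y => (y < d)%R) b)%N.
Proof. elim: b => [|y b IH]; first by rewrite big_nil. by rewrite big_cons IH /= addn0. Qed.

Lemma perm_end (b : seq int) d : perm_eq (b ++ [:: d]) (d :: b).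
Proof. apply/permP => P; rewrite count_cat /=; lia. Qed.

Lemma cnt_split (b : seq int) (d : int) :
  (@count int (fun y => (d - 1 < y)%R) b + @count int (fun y => (y < d)%R) b = size b)%N.
Proof.
elim: b => [|y b IH] //=.
have : ((d - 1 < y)%R + (y < d)%R = 1)%N.
  case h1: (d - 1 < y); case h2: (y < d) => //=; lia.
lia.
Qed.

Lemma mx_dec (b : seq int) d :
  \sum_(y <- b) mx d y = \sum_(y <- b) mx (d - 1) y + (@count int (fun y => y < d) b)%:Z.
Proof.
elim: b => [|y b IH]; first by rewrite !big_nil.
rewrite !big_cons IH /=.
have : mx d y = mx (d - 1) y + (y < d)%R%:Z.
  rewrite /mx; case h1: (d <= y); case h2: (d - 1 <= y); case h3: (y < d) => /=; lia.
lia.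
Qed.

Lemma inv_map1 (b : seq int) : inv (map (fun x => x + 1) b) = inv b.
Proof.
elim: b => [|y b IH] //=; rewrite IH count_map; congr (_ + _)%N.
apply: eq_count => z /=.
case h1: (y + 1 < z + 1); case h2: (y < z) => //; lia.
Qed.

Lemma count_map1 (b : seq int) (d : int) :
  @count int (fun y => (d < y)%R) (map (fun x => x + 1) b) = @count int (fun y => (d <= y)%R) b.
Proof.
rewrite count_map; apply: eq_count => z /=.
case h1: (d < z + 1); case h2: (d <= z) => //; lia.
Qed.

Lemma cnt_split2 (b : seq int) (d : int) :
  (@count int (fun y => (d <= y)%R) b + @count int (fun y => (y < d)%R) b = size b)%N.
Proof.
elim: b => [|y b IH] //=.
have : ((d <= y)%R + (y < d)%R = 1)%N.
  case h1: (d <= y); case h2: (y < d) => //=; lia.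
lia.
Qed.

Lemma mx_inc (b : seq int) d :
  \sum_(y <- b) mx d (y + 1) = \sum_(y <- b) mx d y + (@count int (fun y => (d <= y)%R) b)%:Z.
Proof.
elim: b => [|y b IH]; first by rewrite !big_nil.
rewrite !big_cons IH /=.
have : mx d (y + 1) = mx d y + (d <= y)%R%:Z.
  rewrite /mx; case h1: (d <= y + 1); case h2: (d <= y) => /=; lia.
lia.
Qed.

Lemma mx_11 (b : seq int) c :
  \sum_(y <- b) mx (c + 1) (y + 1) = \sum_(y <- b) mx c y + (size b)%:Z.
Proof.
elim: b => [|y b IH]; first by rewrite !big_nil.
rewrite !big_cons IH /=.
have : mx (c + 1) (y + 1) = mx c y + 1.
  rewrite /mx; case h1: (c + 1 <= y + 1); case h2: (c <= y) => /=; lia.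
lia.
Qed.

Lemma Q_map1 (l : seq int) : Q (map (fun x => x + 1) l) = Q l + (size l)%:Z * ((size l)%:Z - 1).
Proof.
elim: l => [|c l IH]; first by rewrite /Q !big_nil.
rewrite /= !Q_cons IH big_map mx_11 /=.
set A := \sum_(y <- l) mx c y.
set n := (size l)%:Z.
have -> : ((size l).+1)%:Z = n + 1 by rewrite -addn1 PoszD.
nia.
Qed.

Lemma mid_setup (M : nat) (b : seq int) (t : nat) :
  size b = M -> (1 <= t <= M.+1)%N -> (t <= M)%N ->
  exists p c r, b = p ++ c :: r /\ t = (size p).+1.
Proof.
move=> Hb /andP [H1 _] H2.
have [p [c [r [E Hp]]]] := decomp1 b t.-1 ltac:(lia).
by exists p, c, r; split => //; rewrite Hp prednK.
Qed.

Lemma trans_K M q s a pr s' : trans M q s a pr s' ->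
  wf M s /\ wf M s' /\ Kp M s' = Kp M s + Kdelta a.
Proof.
case.
- move=> b d T t [[/= Hb Ht _] _] HtM Hlt.
  have [p [c [r [E Et]]]] := mid_setup _ _ _ Hb Ht HtM; subst b t.
  rewrite /= nth_mid set_nth_mid in Hlt *.
  split; first by split.
  split.
    split => /=; last lia.
    by move: Hb; rewrite !size_cat.
  rewrite /Kp /= xv1 xv2 /=; lia.
- move=> b d T t [[/= Hb Ht _] _] HtM Hlt.
  have [p [c [r [E Et]]]] := mid_setup _ _ _ Hb Ht HtM; subst b t.
  rewrite /= nth_mid in Hlt *.
  split; first by split.
  split; first by split => /=; lia.
  rewrite /Kp /= xv1 xv2 /= (Q_perm _ _ (perm_mid p r c d)).
  have := inv_swap p d c r; rewrite Hlt (lt_gtF Hlt) /=; lia.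
- move=> b d T t [[/= Hb Ht _] _] HtM Heq.
  have [p [c [r [E Et]]]] := mid_setup _ _ _ Hb Ht HtM; subst b t.
  rewrite /= nth_mid in Heq *; subst c.
  split; first by split.
  split; first by split => /=; lia.
  rewrite /Kp /= xv1 xv2 /=; lia.
- move=> b d T t [[/= Hb Ht _] _] HtM Hlt.
  have [p [c [r [E Et]]]] := mid_setup _ _ _ Hb Ht HtM; subst b t.
  rewrite /= nth_mid in Hlt *.
  split; first by split.
  split; first by split => /=; lia.
  rewrite /Kp /= xv1 xv2 /= (Q_perm _ _ (perm_mid p r c d)).
  have := inv_swap p d c r; rewrite Hlt (lt_gtF Hlt) /=; lia.
- move=> b d T [[/= Hb Ht _] /andP [HT0 HTM]] HTlt.
  split; first by split.
  split; first by split => //=.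
  rewrite /Kp /= -Hb xv_end xv_start (Q_perm _ _ (perm_end b d)) !Q_cons inv_cat /= cross1.
  rewrite (mx_dec b d).
  have H := cnt_split b d.
  set A := \sum_(y <- b) mx (d - 1) y.
  set c1 := @count int (fun y => (d - 1 < y)%R) b in H *.
  set c2 := @count int (fun y => (y < d)%R) b in H *.
  rewrite mulrDr mulr1; lia.
- move=> b d [[/= Hb Ht _] _].
  split; first by split.
  split; first by split => //=; rewrite size_map.
  rewrite /Kp /= -Hb xv_end.
  have -> : size b = size (map (fun x => x + 1) b) by rewrite size_map.
  rewrite xv_start (Q_perm _ _ (perm_end b d)) !Q_cons inv_cat /= cross1.
  rewrite inv_map1 count_map1 big_map Q_map1 mx_inc size_map.
  have := cnt_split2 b d.
  set A := \sum_(y <- b) mx d y.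
  set n := size b.
  nia.
Qed.

Lemma path_K M q s l s'' : bdm_path M q s l s'' ->
  Kclass M s'' = Kclass M s + \sum_(a <- l) Kdelta a.
Proof.
elim => [s1|s1 a pr s2 l1 s3 Ht _ IH]; first by rewrite big_nil addr0.
have [H1 [H2 H3]] := trans_K _ _ _ _ _ _ Ht.
by rewrite IH big_cons (Kclass_eq _ _ H2) (Kclass_eq _ _ H1) H3 addrA.
Qed.

Lemma sum_Kdelta l : \sum_(a <- l) Kdelta a = (count_act A_I l)%:Z - (count_act A_Nlt l)%:Z.
Proof.
elim: l => [|a l IH]; first by rewrite big_nil.
rewrite big_cons IH /count_act /=; case: a => /=; lia.
Qed.

Lemma zero_list l : all (fun y : int => y == 0) l -> inv l = 0%N /\ Q l = 0.
Proof.
elim: l => [|y l IH]; first by split => //; rewrite /Q !big_nil.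
move=> /= /andP [/eqP -> Hl]; have [I1 I2] := IH Hl.
split.
  rewrite /= I1 addn0; apply/eqP; rewrite -leqn0 leqNgt -has_count; apply/negP.
  move/hasP => [z zl]; move/allP: Hl => /(_ z zl) /eqP -> //.
rewrite Q_cons I2 add0r.
have -> : \sum_(b <- l) mx 0 b = 0.
  rewrite big_seq big1 // => b bl; move/allP: Hl => /(_ b bl) /eqP ->; by rewrite /mx.
by rewrite mulr0.
Qed.

Lemma K_s0 M : Kclass M (s0 M) = 0.
Proof.
have Hw : wf M (s0 M) by split => //=; rewrite size_nseq.
rewrite (Kclass_eq _ _ Hw) /Kp.
have Hx : all (fun y : int => y == 0) (xvec (s0 M)).
  rewrite /xvec /= all_cat /= take_oversize ?drop_oversize ?size_nseq //= andbT.
  by rewrite all_nseq eqxx orbT.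
have [-> ->] := zero_list _ Hx.
by rewrite /= mulr0 addr0 oppr0 add0r.
Qed.

Theorem theorem8 (M q : nat) (hM : (1 <= M)%N) (hq : (2 <= q)%N) :
  (forall (s s' : bdm_state) (a : action) (p : rat),
      in_S M s -> in_S M s' -> trans M q s a p s' ->
      Kclass M s' = Kclass M s + Kdelta a)
  /\
  (forall (s : bdm_state) (l : seq action),
      bdm_path M q (s0 M) l s ->
      Kclass M s - Kclass M (s0 M) = Kclass M s /\
      Kclass M s = (count_act A_I l)%:Z - (count_act A_Nlt l)%:Z).
Proof.
split.
  move=> s s' a p _ _ Ht.
  have [H1 [H2 H3]] := trans_K _ _ _ _ _ _ Ht.
  by rewrite (Kclass_eq _ _ H2) (Kclass_eq _ _ H1) H3.
move=> s l Hp.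
rewrite K_s0 subr0; split => //.
by rewrite (path_K _ _ _ _ _ Hp) K_s0 add0r sum_Kdelta.
Qed.
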